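(* For every $\mathbf v\in\mathbf V_h$ (identified with its coefficient vector), $$\|B_{\mathbf u}\mathbf v\|_{M_p^{-1}}\le\frac1\zeta\|\mathbf v\|_{A_{\mathbf u}}.$$
   Context: $\Omega\subset\mathbb{R}^d$, $d\in\{2,3\}$, bounded, with a simplicial mesh; $\mu>0,\lambda\ge0$ Lamé coefficients, $\zeta=\sqrt{\lambda+2\mu/d}$. $\mathbf V_h$: continuous piecewise linear vector fields (vanishing on a Dirichlet part of the boundary) enriched with edge/face bubble functions; $Q_h$ piecewise constants. $A_{\mathbf u}$ is the matrix of $a(\mathbf u,\mathbf v)=2\mu\int_\Omega\varepsilon(\mathbf u):\varepsilon(\mathbf v)+\lambda\int_\Omega\operatorname{div}\mathbf u\operatorname{div}\mathbf v$ on $\mathbf V_h$, $\varepsilon(\mathbf u)=\tfrac12(\nabla\mathbf u+\nabla\mathbf u^T)$; $B_{\mathbf u}$ is the matrix of $-(\operatorname{div}\mathbf v,q)$, $\mathbf v\in\mathbf V_h,q\in Q_h$; $M_p$ the mass matrix of $Q_h$. For SPD $H$, $\|\mathbf x\|_H^2=(H\mathbf x,\mathbf x)$. *)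

(* Defs.v *)
From HB Require Import structures.
From mathcomp Require Import all_boot all_order all_algebra.
From mathcomp Require Import all_classical all_reals all_analysis.
Set Implicit Arguments. Unset Strict Implicit. Unset Printing Implicit Defensive.
Import Order.TTheory GRing.Theory Num.Theory.
Local Open Scope ring_scope.

Definition symgrad (R : realType) (d : nat) (G : 'M[R]_d) : 'M[R]_d :=
  2^-1 *: (G + G^T).

Definition frob (R : realType) (d : nat) (A B : 'M[R]_d) : R :=
  \sum_(p < d) \sum_(q < d) A p q * B p q.

Definition divg (R : realType) (d : nat) (G : 'M[R]_d) : R := \tr G.

Definition zeta (R : realType) (d : nat) (mu lam : R) : R :=
  Num.sqrt (lam + 2 * mu / d%:R).

(* Gradient (Jacobian) field of the discrete field with coefficient vector v
   in the basis whose Jacobian fields are G_i. *)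
Definition gradv (R : realType) (d nu : nat) (T : Type)
  (G : 'I_nu -> T -> 'M[R]_d) (v : 'cV[R]_nu) (x : T) : 'M[R]_d :=
  \sum_(i < nu) v i 0 *: G i x.

(* Elasticity bilinear form
   a(u,v) = 2 mu \int eps(u):eps(v) + lam \int div u div v  on Omega (= setT). *)
Definition aform (R : realType) (d : nat) (dT : measure_display)
  (T : measurableType dT) (m : {measure set T -> \bar R}) (mu lam : R)
  (Gu Gv : T -> 'M[R]_d) : R :=
  2 * mu * Rintegral m setT (fun x => frob (symgrad (Gu x)) (symgrad (Gv x)))
  + lam * Rintegral m setT (fun x => divg (Gu x) * divg (Gv x)).

Definition Amat (R : realType) (d nu : nat) (dT : measure_display)
  (T : measurableType dT) (m : {measure set T -> \bar R}) (mu lam : R)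
  (G : 'I_nu -> T -> 'M[R]_d) : 'M[R]_nu :=
  \matrix_(i, j) aform m mu lam (G j) (G i).

Definition Bmat (R : realType) (d nu nK : nat) (dT : measure_display)
  (T : measurableType dT) (m : {measure set T -> \bar R})
  (K : 'I_nK -> set T) (G : 'I_nu -> T -> 'M[R]_d) : 'M[R]_(nK, nu) :=
  \matrix_(k, j) - Rintegral m (K k) (fun x => divg (G j x)).

(* pressure mass matrix M_p for piecewise constants: diag(|K_k|) *)
Definition Mpmat (R : realType) (nK : nat) (dT : measure_display)
  (T : measurableType dT) (m : {measure set T -> \bar R})
  (K : 'I_nK -> set T) : 'M[R]_nK :=
  \matrix_(k, l) (if k == l then fine (m (K k)) else 0).

Definition normH (R : realType) (n : nat) (H : 'M[R]_n) (x : 'cV[R]_n) : R :=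
  Num.sqrt ((x^T *m H *m x) 0 0).

(* Main.v *)
Require Import Defs.
From HB Require Import structures.
From mathcomp Require Import all_boot all_order all_algebra.
From mathcomp Require Import all_classical all_reals all_analysis.
Import Order.TTheory GRing.Theory Num.Theory.
Local Open Scope ring_scope.
Local Open Scope classical_set_scope.
Set Implicit Arguments. Unset Strict Implicit.
From mathcomp Require Import measurable_realfun.
From mathcomp Require Import ring lra.
Section L2.
Context (R : realType) (dT : measure_display) (T : measurableType dT)
  (m : {measure set T -> \bar R}).

Definition L2 (D : set T) (f : T -> R) :=
  measurable_fun D f /\ m.-integrable D (fun x => ((f x) ^+ 2)%:E).

Lemma L2_mul D f g : measurable D -> L2 D f -> L2 D g ->
  m.-integrable D (fun x => (f x * g x)%:E).
Proof.
move=> mD [mf If] [mg Ig].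
apply: (@le_integrable _ _ _ m D mD _ (fun x => (f x ^+ 2 + g x ^+ 2)%:E)).
- by apply/measurable_EFinP; apply: measurable_funM.
- move=> x _; rewrite !abse_EFin lee_fin normrM.
  rewrite [X in _ <= X]ger0_norm ?addr_ge0 ?sqr_ge0 //.
  rewrite -(real_normK (num_real (f x))) -(real_normK (num_real (g x))).
  set a := `|f x|; set b := `|g x|.
  have : 0 <= (a - b) ^+ 2 by rewrite sqr_ge0.
  have a0 : 0 <= a by rewrite normr_ge0.
  have b0 : 0 <= b by rewrite normr_ge0.
  nra.
- exact: (integrableD mD If Ig).
Qed.

Lemma L2_add D f g : measurable D -> L2 D f -> L2 D g -> L2 D (fun x => f x + g x).
Proof.
move=> mD hf hg; have Ifg := L2_mul mD hf hg.
case: hf => mf If; case: hg => mg Ig.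
split; first exact: measurable_funD.
have := integrableD mD (integrableD mD If Ig) (integrableZl mD 2 Ifg).
apply: eq_integrable => // x _ /=.
rewrite -EFinM -!EFinD; congr EFin; ring.
Qed.

Lemma L2_scale D c f : measurable D -> L2 D f -> L2 D (fun x => c * f x).
Proof.
move=> mD [mf If]; split; first exact: measurable_funM.
have := integrableZl mD (c ^+ 2) If.
by apply: eq_integrable => // x _ /=; rewrite -EFinM exprMn.
Qed.

Lemma L2_cst D c : measurable D -> (m D < +oo)%E -> L2 D (fun _ => c).
Proof.
move=> mD mDoo; split; first exact: measurable_cst.
apply/integrableP; split; first exact/measurable_EFinP/measurable_cst.
rewrite (eq_integral (cst `|c ^+ 2|%:E)); last by move=> x _.
rewrite integral_cst//.
by rewrite lte_mul_pinfty// lee_fin.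
Qed.

Lemma L2_sum D (I : Type) (s : seq I) (F : I -> T -> R) : measurable D ->
  (forall i, L2 D (F i)) -> L2 D (fun x => \sum_(i <- s) F i x).
Proof.
move=> mD hF; elim: s => [|i s IH].
  split.
    by apply: eq_measurable_fun (measurable_cst (0:R)) => x _; rewrite big_nil.
  by apply: eq_integrable (integrable0 m D) => // x _; rewrite big_nil expr0n.
have := L2_add mD (hF i) IH; case=> h1 h2; split.
  by apply: eq_measurable_fun h1 => x _; rewrite big_cons.
by apply: eq_integrable h2 => // x _; rewrite big_cons.
Qed.

Lemma L2S D E f : measurable D -> measurable E -> E `<=` D -> L2 D f -> L2 E f.
Proof.
move=> mD mE ED [mf If]; split; first exact: measurable_funS mf.
exact: integrableS If.
Qed.

Lemma Rint_sum D (I : Type) (s : seq I) (F : I -> T -> R) : measurable D ->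
  (forall i, m.-integrable D (fun x => (F i x)%:E)) ->
  m.-integrable D (fun x => (\sum_(i <- s) F i x)%:E) /\
  Rintegral m D (fun x => \sum_(i <- s) F i x) = \sum_(i <- s) Rintegral m D (F i).
Proof.
move=> mD hF; elim: s => [|i s [IH1 IH2]].
  split.
    by apply: eq_integrable (integrable0 m D) => // x _; rewrite big_nil.
  rewrite big_nil (eq_Rintegral _ (g := fun _ => 0)); last by move=> x _; rewrite big_nil.
  by rewrite Rintegral_cst// mul0r.
split.
  by apply: eq_integrable (integrableD mD (hF i) IH1) => // x _; rewrite big_cons.
rewrite big_cons -IH2 -RintegralD//; last exact: hF.
by apply: eq_Rintegral => x _; rewrite big_cons.
Qed.

End L2.
Section Mat.
Context (R : realType) (d : nat).

Lemma frob_sym (A B : 'M[R]_d) : frob A B = frob B A.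
Proof. by apply: eq_bigr => p _; apply: eq_bigr => q _; rewrite mulrC. Qed.

Lemma frob_suml (n : nat) (c : 'I_n -> R) (A : 'I_n -> 'M[R]_d) (B : 'M[R]_d) :
  frob (\sum_(i < n) c i *: A i) B = \sum_(i < n) c i * frob (A i) B.
Proof.
rewrite /frob.
transitivity (\sum_(p < d) \sum_(i < n) \sum_(q < d) c i * (A i p q * B p q)).
  apply: eq_bigr => p _.
  under eq_bigr => q _ do rewrite summxE big_distrl /=.
  rewrite exchange_big /=; apply: eq_bigr => i _; apply: eq_bigr => q _.
  by rewrite !mxE mulrA.
rewrite exchange_big /=; apply: eq_bigr => i _; rewrite big_distrr /=.
by apply: eq_bigr => p _; rewrite big_distrr.
Qed.

Lemma symgrad_sum (n : nat) (c : 'I_n -> R) (A : 'I_n -> 'M[R]_d) :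
  symgrad (\sum_(i < n) c i *: A i) = \sum_(i < n) c i *: symgrad (A i).
Proof.
apply/matrixP => p q; rewrite /symgrad !(mxE, summxE) -big_split big_distrr /=.
by apply: eq_bigr => i _; rewrite !mxE; ring.
Qed.

Lemma trace_sum (n : nat) (c : 'I_n -> R) (A : 'I_n -> 'M[R]_d) :
  \tr (\sum_(i < n) c i *: A i) = \sum_(i < n) c i * \tr (A i).
Proof.
rewrite /mxtrace.
under eq_bigr => p _ do rewrite summxE.
rewrite exchange_big /=; apply: eq_bigr => i _; rewrite big_distrr /=.
by apply: eq_bigr => p _; rewrite mxE.
Qed.

Lemma divg_symgrad (A : 'M[R]_d) : divg A = \tr (symgrad A).
Proof.
rewrite /divg /symgrad mxtraceZ mxtraceD mxtrace_tr.
by field.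
Qed.

Lemma sum_sqr_le (a : 'I_d -> R) :
  (\sum_(p < d) a p) ^+ 2 <= d%:R * \sum_(p < d) a p ^+ 2.
Proof.
set S := \sum_(p < d) a p; set Q := \sum_(p < d) a p ^+ 2.
have H : 0 <= \sum_(p < d) \sum_(q < d) (a p - a q) ^+ 2.
  by apply: sumr_ge0 => p _; apply: sumr_ge0 => q _; apply: sqr_ge0.
have E1 : forall p : 'I_d, \sum_(q < d) (a p - a q) ^+ 2
    = d%:R * a p ^+ 2 - 2 * a p * S + Q.
  move=> p.
  rewrite (eq_bigr (fun q => a p ^+ 2 - 2 * a p * a q + a q ^+ 2)); last first.
    by move=> q _; ring.
  rewrite big_split /= sumrB sumr_const card_ord -big_distrr /=.
  by rewrite (mulrC d%:R) mulr_natr.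
rewrite (eq_bigr _ (fun p _ => E1 p)) big_split /= sumrB sumr_const card_ord in H.
have e1 : Q *+ d = d%:R * Q by rewrite mulr_natl.
have e2 : \sum_(i < d) 2 * a i * S = 2 * S * S by rewrite -big_distrl -big_distrr.
rewrite e1 e2 ?mul1r ?mulr1 in H.
rewrite -big_distrr /= -/Q in H. nra.
Qed.

Lemma div_frob (A : 'M[R]_d) :
  (divg A) ^+ 2 <= d%:R * frob (symgrad A) (symgrad A).
Proof.
rewrite divg_symgrad; set S := symgrad A.
apply: (le_trans (sum_sqr_le (fun p => S p p))).
rewrite ler_wpM2l // /frob; apply: ler_sum => p _.
rewrite (bigD1 p) //= -expr2 lerDl.
by apply: sumr_ge0 => q _; rewrite -expr2 sqr_ge0.
Qed.

End Mat.
Section Int.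
Context (R : realType) (dT : measure_display) (T : measurableType dT)
  (m : {measure set T -> \bar R}) (d : nat).

Definition MatL2 (D : set T) (F : T -> 'M[R]_d) :=
  forall p q, L2 m D (fun x => F x p q).

Lemma L2_ext D f g : (forall x, f x = g x) -> L2 m D f -> L2 m D g.
Proof. by move=> fg; have -> : g = f by apply: funext => x; rewrite fg. Qed.

Lemma int_ext D f g : (forall x, f x = g x) ->
  m.-integrable D (fun x => (f x)%:E) -> m.-integrable D (fun x => (g x)%:E).
Proof. by move=> fg; have -> : g = f by apply: funext => x; rewrite fg. Qed.

Lemma intZ D c f : measurable D -> m.-integrable D (fun x => (f x)%:E) ->
  m.-integrable D (fun x => (c * f x)%:E).
Proof.
move=> mD If; have := integrableZl mD c If.
by apply: eq_integrable => // x _; rewrite EFinM.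
Qed.

Lemma intD D f g : measurable D -> m.-integrable D (fun x => (f x)%:E) ->
  m.-integrable D (fun x => (g x)%:E) ->
  m.-integrable D (fun x => (f x + g x)%:E).
Proof.
move=> mD If Ig; have := integrableD mD If Ig.
by apply: eq_integrable => // x _; rewrite EFinD.
Qed.

Lemma L2_int D f : measurable D -> (m D < +oo)%E -> L2 m D f ->
  m.-integrable D (fun x => (f x)%:E).
Proof.
move=> mD mDoo hf; have := L2_mul mD hf (L2_cst (m:=m) 1 mD mDoo).
by apply: int_ext => x; rewrite mulr1.
Qed.

Lemma MatL2_sum D n (c : 'I_n -> R) (F : 'I_n -> T -> 'M[R]_d) : measurable D ->
  (forall i, MatL2 D (F i)) -> MatL2 D (fun x => \sum_(i < n) c i *: F i x).
Proof.
move=> mD hF p q.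
apply: (@L2_ext D (fun x => \sum_(i < n) c i * F i x p q)).
  by move=> x; rewrite summxE; apply: eq_bigr => i _; rewrite mxE.
apply: (L2_sum _ (F := fun i x => c i * F i x p q) mD) => i; apply: L2_scale => //; exact: hF.
Qed.

Lemma MatL2_sym D F : measurable D -> MatL2 D F -> MatL2 D (fun x => symgrad (F x)).
Proof.
move=> mD hF p q.
apply: (@L2_ext D (fun x => 2^-1 * (F x p q + F x q p))).
  by move=> x; rewrite !mxE.
by apply: L2_scale => //; apply: L2_add.
Qed.

Lemma L2_div D F : measurable D -> MatL2 D F -> L2 m D (fun x => divg (F x)).
Proof. by move=> mD hF; apply: L2_sum. Qed.

Lemma int_frob D F H : measurable D -> MatL2 D F -> MatL2 D H ->
  m.-integrable D (fun x => (frob (F x) (H x))%:E).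
Proof.
move=> mD hF hH.
apply: (proj1 (Rint_sum _ mD _)) => p.
apply: (proj1 (Rint_sum _ mD _)) => q.
exact: L2_mul.
Qed.

Lemma Rint_lin D n (c : 'I_n -> R) (g : 'I_n -> T -> R) : measurable D ->
  (forall i, m.-integrable D (fun x => (g i x)%:E)) ->
  Rintegral m D (fun x => \sum_(i < n) c i * g i x)
  = \sum_(i < n) c i * Rintegral m D (g i).
Proof.
move=> mD hg.
rewrite (proj2 (Rint_sum _ (F:=fun i x => c i * g i x) mD _)); last first.
  by move=> i; apply: intZ.
by apply: eq_bigr => i _; rewrite RintegralZl //; exact: hg.
Qed.

Lemma aform_sym mu lam (F H : T -> 'M[R]_d) : aform m mu lam F H = aform m mu lam H F.
Proof.
rewrite /aform; congr (_ * _ + _ * _); apply: eq_Rintegral => x _.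
  exact: frob_sym.
exact: mulrC.
Qed.

Lemma aform_suml mu lam n (c : 'I_n -> R) (F : 'I_n -> T -> 'M[R]_d) H :
  (forall i, MatL2 setT (F i)) -> MatL2 setT H ->
  aform m mu lam (fun x => \sum_(i < n) c i *: F i x) H
  = \sum_(i < n) c i * aform m mu lam (F i) H.
Proof.
move=> hF hH; rewrite /aform.
rewrite (eq_Rintegral _ (g := fun x => \sum_(i < n) c i *
   frob (symgrad (F i x)) (symgrad (H x)))); last first.
  by move=> x _; rewrite symgrad_sum frob_suml.
rewrite (eq_Rintegral _ (f := fun x => divg _ * _) (g := fun x => \sum_(i < n) c i *
   (divg (F i x) * divg (H x)))); last first.
  by move=> x _; rewrite /divg trace_sum big_distrl /=; apply: eq_bigr => i _;
    rewrite mulrA.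
rewrite !Rint_lin //.
- by rewrite !big_distrr -big_split /=; apply: eq_bigr => i _; ring.
- move=> i; apply: L2_mul => //;
    [exact: (L2_div measurableT (hF i)) | exact: (L2_div measurableT hH)].
- move=> i; apply: int_frob => //;
    [exact: (MatL2_sym measurableT (hF i)) | exact: (MatL2_sym measurableT hH)].
Qed.

End Int.
Section Fin.
Context (R : realType) (dT : measure_display) (T : measurableType dT)
  (m : {measure set T -> \bar R}).

Lemma quad n (H : 'M[R]_n) (y : 'cV[R]_n) :
  (y^T *m H *m y) 0 0 = \sum_i \sum_j y i 0 * H i j * y j 0.
Proof.
rewrite mxE; under eq_bigr => j _ do rewrite mxE big_distrl /=.
rewrite exchange_big /=; apply: eq_bigr => i _; apply: eq_bigr => j _.
by rewrite mxE.
Qed.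

Lemma cs_K D f : measurable D -> (0 < m D)%E -> (m D < +oo)%E -> L2 m D f ->
  (Rintegral m D f) ^+ 2 / fine (m D) <= Rintegral m D (fun x => f x ^+ 2).
Proof.
move=> mD mD0 mDoo hf.
have a0 : 0 < fine (m D) by apply: fine_gt0; rewrite mD0 mDoo.
set a := fine (m D) in a0 *.
set I := Rintegral m D f; set J := Rintegral m D (fun x => f x ^+ 2).
have If := L2_int mD mDoo hf.
have Jf : m.-integrable D (fun x => (f x ^+ 2)%:E) by case: hf.
have Ic : forall c, m.-integrable D (fun _ => c%:E).
  by move=> c; apply: (L2_int mD mDoo (L2_cst (m:=m) c mD mDoo)).
have H0 : 0 <= Rintegral m D (fun x => (a * f x - I) ^+ 2).
  by apply: Rintegral_ge0 => x _; apply: sqr_ge0.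
have E : Rintegral m D (fun x => (a * f x - I) ^+ 2) = a ^+ 2 * J - 2 * a * I * I + I ^+ 2 * a.
  rewrite (eq_Rintegral _ (g := fun x => (a ^+ 2 * f x ^+ 2 + (- (2 * a * I)) * f x) + I ^+ 2));
    last by move=> x _; ring.
  have I1 : m.-integrable D (fun x => (a ^+ 2 * f x ^+ 2)%:E) by apply: intZ.
  have I2 : m.-integrable D (fun x => (- (2 * a * I) * f x)%:E) by apply: intZ.
  have I3 : m.-integrable D (fun x => (a ^+ 2 * f x ^+ 2 + - (2 * a * I) * f x)%:E).
    exact: (intD mD I1 I2).
  have I4 := Ic (I ^+ 2).
  rewrite RintegralD // RintegralD //.
  rewrite Rintegral_cst // !RintegralZl // -/I -/J -/a; ring.
rewrite E in H0.
rewrite ler_pdivrMr //.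
nra.
Qed.

Lemma sumK nK (K : 'I_nK -> set T)
  (hKmeas : forall k, measurable (K k))
  (hKdisj : forall k l, k != l -> K k `&` K l = set0)
  (hKcover : \bigcup_(k in [set: 'I_nK]) K k = [set: T]) (g : T -> R) :
  m.-integrable setT (fun x => (g x)%:E) ->
  Rintegral m setT g = \sum_(k < nK) Rintegral m (K k) g.
Proof.
move=> Ig.
have cov : \big[setU/set0]_(k <- index_enum 'I_nK) K k = setT.
  have e : [set` index_enum 'I_nK] = [set: 'I_nK].
    by apply/seteqP; split => k //= _; rewrite mem_index_enum.
  by rewrite -bigcup_seq e hKcover.
have triv : trivIset [set` index_enum 'I_nK] K.
  move=> i j _ _ [x [xi xj]]; case: (eqVneq i j) => // /hKdisj ij.
  by have : (K i `&` K j) x by []; rewrite ij.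
have mg : measurable_fun (\big[setU/set0]_(k <- index_enum 'I_nK) K k) (EFin \o g).
  by rewrite cov; case/integrableP : Ig.
have := @integral_bigsetU_EFin _ _ _ m _ K g (index_enum _) hKmeas (index_enum_uniq _) triv mg.
rewrite /= cov => H.
have e : forall k, (\int[m]_(x in K k) (g x)%:E)%E = (Rintegral m (K k) g)%:E.
  move=> k; rewrite /Rintegral fineK //; apply: integrable_fin_num => //.
  exact: integrableS Ig.
rewrite (eq_bigr _ (fun k _ => e k)) sumEFin in H.
by rewrite /Rintegral H.
Qed.

End Fin.
Unset Implicit Arguments.
Set Strict Implicit.
Theorem lemmaA1
  (R : realType) (d : nat) (hd : d = 2%N \/ d = 3%N)
  (dT : measure_display) (T : measurableType dT)
  (m : {measure set T -> \bar R})
  (nK : nat) (K : 'I_nK -> set T)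
  (hKmeas : forall k, measurable (K k))
  (hKpos : forall k, (0 < m (K k))%E)
  (hKfin : forall k, (m (K k) < +oo)%E)
  (hKdisj : forall k l, k != l -> K k `&` K l = set0)
  (hKcover : \bigcup_(k in [set: 'I_nK]) K k = [set: T])
  (nu : nat) (G : 'I_nu -> T -> 'M[R]_d)
  (hGmeas : forall i p q, measurable_fun [set: T] (fun x => G i x p q))
  (hGL2 : forall i p q,
      m.-integrable [set: T] (fun x => ((G i x p q) ^+ 2)%:E))
  (mu lam : R) (hmu : 0 < mu) (hlam : 0 <= lam) :
  forall v : 'cV[R]_nu,
    normH (invmx (Mpmat m K)) (Bmat m K G *m v)
      <= (zeta d mu lam)^-1 * normH (Amat m mu lam G) v.
Proof.
move=> v.
pose w := fun x => \sum_(i < nu) v i 0 *: G i x.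
have hG : forall i, MatL2 m setT (G i) by move=> i p q; split.
have hw : MatL2 m setT w := MatL2_sum (fun i => v i 0) measurableT hG.
pose f := fun x => divg (w x).
have hf : L2 m setT f := L2_div measurableT hw.
pose E := Rintegral m setT (fun x => frob (symgrad (w x)) (symgrad (w x))).
pose Dv := Rintegral m setT (fun x => f x ^+ 2).
have stepA : (v^T *m Amat m mu lam G *m v) 0 0 = 2 * mu * E + lam * Dv.
  rewrite quad.
  transitivity (\sum_(i < nu) v i 0 * aform m mu lam w (G i)).
    apply: eq_bigr => i _.
    rewrite (aform_suml mu lam (fun j => v j 0)) // big_distrr /=.
    by apply: eq_bigr => j _; rewrite mxE; ring.
  transitivity (aform m mu lam w w); last first.
    rewrite /aform; congr (_ + _ * _).
  have -> : aform m mu lam w w = \sum_(j < nu) v j 0 * aform m mu lam (G j) w.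
    exact: (aform_suml mu lam (fun j => v j 0) (F := G) (H := w)).
  by apply: eq_bigr => i _; rewrite aform_sym.
have stepB : forall k, (Bmat m K G *m v) k 0 = - Rintegral m (K k) f.
  move=> k; rewrite mxE.
  rewrite (eq_Rintegral _ (g := fun x => \sum_(j < nu) v j 0 * divg (G j x))); last first.
    by move=> x _; rewrite /f /divg /w trace_sum.
  rewrite Rint_lin //; last first.
    move=> j; apply: L2_int => //.
    apply: (L2S measurableT (hKmeas k)) => //.
    exact: (L2_div measurableT (hG j)).
  rewrite -sumrN; apply: eq_bigr => j _; rewrite mxE; ring.
pose a := fun k => fine (m (K k)).
have a0 : forall k, 0 < a k by move=> k; apply: fine_gt0; rewrite hKpos hKfin.
pose Dm := \matrix_(k, l) (if k == l then (a k)^-1 else 0) : 'M[R]_nK.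
have MD : Mpmat m K *m Dm = 1%:M.
  apply/matrixP => k l; rewrite mxE [RHS]mxE (bigD1 k) //= big1 ?addr0; last first.
    by move=> j /negbTE jk; rewrite mxE eq_sym jk mul0r.
  rewrite !mxE eqxx; case: (eqVneq k l) => [_|kl].
    by rewrite mulfV // gt_eqF // a0.
  by rewrite mulr0.
have invM : invmx (Mpmat m K) = Dm.
  have [U _] := mulmx1_unit MD.
  by rewrite -[Dm]mul1mx -(mulVmx U) -mulmxA MD mulmx1.
pose y := Bmat m K G *m v.
pose X := \sum_(k < nK) (Rintegral m (K k) f) ^+ 2 / a k.
have qX : (y^T *m Dm *m y) 0 0 = X.
  rewrite quad; apply: eq_bigr => k _.
  rewrite (bigD1 k) //= big1 ?addr0; last first.
    by move=> j /negbTE jk; rewrite (_ : Dm k j = 0) ?mulr0 ?mul0r // /Dm mxE eq_sym jk.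
  rewrite (_ : Dm k k = (a k)^-1); last by rewrite /Dm mxE eqxx.
  rewrite /y stepB; ring.
have XD : X <= Dv.
  rewrite /Dv (sumK hKmeas hKdisj hKcover); last by case: hf.
  apply: ler_sum => k _; apply: cs_K => //.
  exact: (L2S measurableT (hKmeas k)).
have hSw : MatL2 m setT (fun x => symgrad (w x)) := MatL2_sym measurableT hw.
have IE : m.-integrable setT (fun x => (frob (symgrad (w x)) (symgrad (w x)))%:E).
  exact: int_frob.
have DE : Dv <= d%:R * E.
  rewrite /E -RintegralZl //.
  apply: le_Rintegral => //.
  - by case: hf.
  - exact: intZ.
  - move=> x _; exact: div_frob.
have E0 : 0 <= E.
  apply: Rintegral_ge0 => x _; apply: sumr_ge0 => p _; apply: sumr_ge0 => q _.
  by rewrite -expr2 sqr_ge0.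
have Dv0 : 0 <= Dv by apply: Rintegral_ge0 => x _; apply: sqr_ge0.
have X0 : 0 <= X.
  by apply: sumr_ge0 => k _; apply: divr_ge0; [apply: sqr_ge0 | apply: ltW].
rewrite /normH invM -/y qX stepA /zeta.
have dpos : 0 < d%:R :> R by case: hd => ->.
set z := lam + 2 * mu / d%:R.
have z0 : 0 < z.
  rewrite /z; have : 0 < 2 * mu / d%:R by apply: divr_gt0 => //; apply: mulr_gt0.
  lra.
have Y0 : 0 <= 2 * mu * E + lam * Dv.
  by apply: addr_ge0; apply: mulr_ge0 => //; apply: mulr_ge0 => //; apply: ltW.
have zi0 : 0 <= z^-1 by rewrite invr_ge0 ltW.
rewrite -(sqrtrV (ltW z0)) -(sqrtrM _ zi0) ler_sqrt; last exact: mulr_ge0.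
rewrite mulrC ler_pdivlMr //.
have XdE : X / d%:R <= E by rewrite ler_pdivrMr // mulrC; exact: le_trans XD DE.
have -> : X * z = lam * X + 2 * mu * (X / d%:R) by rewrite /z; ring.
nra.
Qed.
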